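(* Let $X=(\mathbb C^\times)^3$ with coordinates $x=(x_{22},x_{11},x_{21})$. For $c\in\mathbb C^\times$ put $c_2=\dfrac{c\,x_{21}x_{22}+x_{11}^2}{x_{21}x_{22}+x_{11}^2}$ and define $$e_0^c(x)=\Big(\tfrac{c_2}{c}x_{22},\ \tfrac{x_{11}}{c},\ \tfrac{x_{21}}{c_2}\Big),\quad e_1^c(x)=(x_{22},\,c\,x_{11},\,x_{21}),\quad e_2^c(x)=\Big(c_2x_{22},\ x_{11},\ \tfrac{c}{c_2}x_{21}\Big),$$ $$\varepsilon_0(x)=x_{21}+\frac{x_{11}^2}{x_{22}},\quad \varepsilon_1(x)=\frac{x_{22}}{x_{11}},\quad \varepsilon_2(x)=\frac{x_{21}x_{22}+x_{11}^2}{x_{22}^2x_{21}},$$ $$\gamma_0(x)=\frac1{x_{11}^2},\quad \gamma_1(x)=\frac{x_{11}^2}{x_{21}x_{22}},\quad \gamma_2(x)=\frac{x_{21}^2x_{22}^2}{x_{11}^2}.$$ Then $(X,\{e_i\}_{i=0,1,2},\{\gamma_i\}_{i=0,1,2},\{\varepsilon_i\}_{i=0,1,2})$ is a positive geometric crystal for the affine Lie algebra $C_2^{(1)}$.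
   Context: The generalized Cartan matrix $(a_{ij})_{i,j\in\{0,1,2\}}$ of $C_2^{(1)}$ has $a_{ii}=2$, $a_{01}=-1$, $a_{10}=-2$, $a_{12}=-2$, $a_{21}=-1$, $a_{02}=a_{20}=0$. A geometric crystal for an affine Lie algebra with index set $I$ and Cartan matrix $(a_{ij})$ is a quadruple $(X,\{e_i\},\{\gamma_i\},\{\varepsilon_i\})$ where $X$ is an (ind-)variety, $e_i:\mathbb C^\times\times X\to X$, $(c,x)\mapsto e_i^c(x)$, are rational $\mathbb C^\times$-actions, and $\gamma_i,\varepsilon_i:X\to\mathbb C$ are rational functions such that: (1) $\{1\}\times X\cap\mathrm{dom}(e_i)$ is open dense in $\{1\}\times X$; (2) $\gamma_j(e_i^c(x))=c^{a_{ij}}\gamma_j(x)$; (3) $\varepsilon_i(e_i^c(x))=c^{-1}\varepsilon_i(x)$, and $\varepsilon_i(e_j^c(x))=\varepsilon_i(x)$ if $a_{ij}=a_{ji}=0$; (4) $e_i^{c_1}e_j^{c_2}=e_j^{c_2}e_i^{c_1}$ if $a_{ij}=a_{ji}=0$; $e_i^{c_1}e_j^{c_1c_2}e_i^{c_2}=e_j^{c_2}e_i^{c_1c_2}e_j^{c_1}$ if $a_{ij}=a_{ji}=-1$; $e_i^{c_1}e_j^{c_1^2c_2}e_i^{c_1c_2}e_j^{c_2}=e_j^{c_2}e_i^{c_1c_2}e_j^{c_1^2c_2}e_i^{c_1}$ if $a_{ij}=-2,a_{ji}=-1$; and the analogous length-six relation if $a_{ij}=-3,a_{ji}=-1$. It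 is positive if all the maps $e_i^c$ (coordinatewise), $\varepsilon_i$, $\gamma_i$ are given by ratios of polynomials (in the coordinates and $c$) with positive coefficients. *)

(* Defs.v *)
From HB Require Import structures.
From mathcomp Require Import all_boot all_order all_algebra.
From mathcomp Require Import reals.
From mathcomp Require Import complex.
Set Implicit Arguments. Unset Strict Implicit. Unset Printing Implicit Defensive.
Import Order.TTheory GRing.Theory Num.Theory.
Local Open Scope ring_scope.
Local Open Scope complex_scope.

Section GeomCrystal.
Variable R : realType.
Local Notation C := (R[i]).

Inductive pexpr (m : nat) : Type :=
| PConst of C
| PVar of 'I_m
| PAdd of pexpr m & pexpr m
| PMul of pexpr m & pexpr m.

Fixpoint peval (m : nat) (x : 'I_m -> C) (p : pexpr m) : C :=
  match p with
  | PConst a => a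
  | PVar k => x k
  | PAdd p q => peval x p + peval x q
  | PMul p q => peval x p * peval x q
  end.

(* polynomial expressions all of whose constants are positive reals: these
   are exactly the polynomials with positive coefficients (up to the choice
   of representation) *)
Fixpoint pos_pexpr (m : nat) (p : pexpr m) : Prop :=
  match p with
  | PConst a => 0 < a
  | PVar _ => True
  | PAdd p q => pos_pexpr p /\ pos_pexpr q
  | PMul p q => pos_pexpr p /\ pos_pexpr q
  end.

Definition rational_on (m : nat) (D : ('I_m -> C) -> Prop)
  (f : ('I_m -> C) -> C) : Prop :=
  exists P Q : pexpr m, forall x, D x ->
    peval x Q != 0 /\ f x = peval x P / peval x Q.

Definition pos_rational_on (m : nat) (D : ('I_m -> C) -> Prop)
  (f : ('I_m -> C) -> C) : Prop :=
  exists P Q : pexpr m, [/\ pos_pexpr P, pos_pexpr Q & forall x, D x ->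
    peval x Q != 0 /\ f x = peval x P / peval x Q].

Definition zopen (m : nat) (X V : ('I_m -> C) -> Prop) : Prop :=
  (forall x, V x -> X x) /\
  exists ps : seq (pexpr m), forall x,
    V x <-> (X x /\ has (fun q => peval x q != 0) ps).

Definition zdense (m : nat) (X U : ('I_m -> C) -> Prop) : Prop :=
  forall V, zopen X V -> (exists x, V x) -> exists x, V x /\ U x.

(* points of C^(1+m) seen as (c, x) *)
Definition tl (m : nat) (y : 'I_m.+1 -> C) : 'I_m -> C :=
  fun k => y (lift ord0 k).

Section Data.
Variables (n m : nat).
Variable (e : 'I_n -> C -> ('I_m -> C) -> ('I_m -> C)).
Variable (dom : 'I_n -> C -> ('I_m -> C) -> Prop).

(* composite e_{i_1}^{c_1} ... e_{i_k}^{c_k} (rightmost applied first) *)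
Fixpoint ecomp (l : seq ('I_n * C)) (x : 'I_m -> C) : 'I_m -> C :=
  match l with
  | [::] => x
  | (i, c) :: l' => e i c (ecomp l' x)
  end.

Fixpoint ecomp_def (l : seq ('I_n * C)) (x : 'I_m -> C) : Prop :=
  match l with
  | [::] => True
  | (i, c) :: l' => ecomp_def l' x /\ dom i c (ecomp l' x)
  end.

(* equality of two composites as rational maps *)
Definition erel (l1 l2 : seq ('I_n * C)) : Prop :=
  forall x, ecomp_def l1 x -> ecomp_def l2 x ->
    forall k, ecomp l1 x k = ecomp l2 x k.
End Data.

(* Geometric crystal on X subset C^m for a Cartan matrix A indexed by 'I_n;
   e i c x is defined (as a rational map into X) on dom i c x. *)
Definition geom_crystal (n m : nat) (A : 'I_n -> 'I_n -> int)
  (X : ('I_m -> C) -> Prop)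
  (e : 'I_n -> C -> ('I_m -> C) -> ('I_m -> C))
  (dom : 'I_n -> C -> ('I_m -> C) -> Prop)
  (gam eps : 'I_n -> ('I_m -> C) -> C) : Prop :=
  (
   (forall i c x, dom i c x -> [/\ c != 0, X x & X (e i c x)]) /\
   (forall i, zopen (fun y : 'I_m.+1 -> C => y ord0 != 0 /\ X (tl y))
                    (fun y => dom i (y ord0) (tl y))) /\
   (forall i k, rational_on (fun y : 'I_m.+1 -> C => dom i (y ord0) (tl y))
                            (fun y => e i (y ord0) (tl y) k)) /\
   (forall i, rational_on X (gam i) /\ rational_on X (eps i)) /\
   (forall i x, dom i 1 x -> forall k, e i 1 x k = x k) /\
   (forall i c1 c2, erel e dom [:: (i, c1); (i, c2)] [:: (i, c1 * c2)]) /\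
   (forall i, zopen X (dom i 1) /\ zdense X (dom i 1)) /\
   (forall i j c x, dom i c x -> gam j (e i c x) = c ^ (A i j) * gam j x) /\
   (forall i c x, dom i c x -> eps i (e i c x) = c^-1 * eps i x) /\
   (forall i j c x, A i j = 0 -> A j i = 0 -> dom j c x ->
                    eps i (e j c x) = eps i x) /\
   forall i j c1 c2,
     [/\ (A i j = 0 -> A j i = 0 ->
            erel e dom [:: (i, c1); (j, c2)] [:: (j, c2); (i, c1)]),
         (A i j = -1 -> A j i = -1 ->
            erel e dom [:: (i, c1); (j, c1 * c2); (i, c2)]
                       [:: (j, c2); (i, c1 * c2); (j, c1)]),
         (A i j = -2 -> A j i = -1 ->
            erel e dom [:: (i, c1); (j, c1 ^+ 2 * c2); (i, c1 * c2); (j, c2)]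
                       [:: (j, c2); (i, c1 * c2); (j, c1 ^+ 2 * c2); (i, c1)]) &
         (A i j = -3 -> A j i = -1 ->
            erel e dom [:: (i, c1); (j, c1 ^+ 3 * c2); (i, c1 ^+ 2 * c2);
                           (j, c1 ^+ 3 * c2 ^+ 2); (i, c1 * c2); (j, c2)]
                       [:: (j, c2); (i, c1 * c2); (j, c1 ^+ 3 * c2 ^+ 2);
                           (i, c1 ^+ 2 * c2); (j, c1 ^+ 3 * c2); (i, c1)])]).

Definition pos_geom_crystal (n m : nat) (A : 'I_n -> 'I_n -> int)
  (X : ('I_m -> C) -> Prop)
  (e : 'I_n -> C -> ('I_m -> C) -> ('I_m -> C))
  (dom : 'I_n -> C -> ('I_m -> C) -> Prop)
  (gam eps : 'I_n -> ('I_m -> C) -> C) : Prop :=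
  [/\ geom_crystal A X e dom gam eps,
      (forall i k, pos_rational_on
                     (fun y : 'I_m.+1 -> C => dom i (y ord0) (tl y))
                     (fun y => e i (y ord0) (tl y) k)),
      (forall i, pos_rational_on X (gam i)) &
      (forall i, pos_rational_on X (eps i))].

Definition cartanC2 (i j : 'I_3) : int :=
  match nat_of_ord i, nat_of_ord j with
  | 0, 0 => 2 | 1, 1 => 2 | 2, 2 => 2
  | 0, 1 => -1 | 1, 0 => -2 | 1, 2 => -2 | 2, 1 => -1
  | _, _ => 0
  end.

(* points x = (x22, x11, x21) : coordinate 0 is x22, 1 is x11, 2 is x21 *)
Definition torus3 (x : 'I_3 -> C) : Prop := forall k, x k != 0.

Definition mk3 (a b d : C) : 'I_3 -> C :=
  fun k => match nat_of_ord k with 0 => a | 1 => b | _ => d end.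

Definition x22 (x : 'I_3 -> C) := x (@Ordinal 3 0 isT).
Definition x11 (x : 'I_3 -> C) := x (@Ordinal 3 1 isT).
Definition x21 (x : 'I_3 -> C) := x (@Ordinal 3 2 isT).

Definition cc2 (c : C) (x : 'I_3 -> C) : C :=
  (c * x21 x * x22 x + x11 x ^+ 2) / (x21 x * x22 x + x11 x ^+ 2).

Definition eC2 (i : 'I_3) (c : C) (x : 'I_3 -> C) : 'I_3 -> C :=
  match nat_of_ord i with
  | 0 => mk3 (cc2 c x / c * x22 x) (x11 x / c) (x21 x / cc2 c x)
  | 1 => mk3 (x22 x) (c * x11 x) (x21 x)
  | _ => mk3 (cc2 c x * x22 x) (x11 x) (c / cc2 c x * x21 x)
  end.

(* domain of definition of e_i^c as a map into X = (C^x)^3 via the formulas *)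
Definition domC2 (i : 'I_3) (c : C) (x : 'I_3 -> C) : Prop :=
  [/\ c != 0, torus3 x &
      (nat_of_ord i = 1%N \/
       (x21 x * x22 x + x11 x ^+ 2 != 0 /\ c * x21 x * x22 x + x11 x ^+ 2 != 0))].

Definition epsC2 (i : 'I_3) (x : 'I_3 -> C) : C :=
  match nat_of_ord i with
  | 0 => x21 x + x11 x ^+ 2 / x22 x
  | 1 => x22 x / x11 x
  | _ => (x21 x * x22 x + x11 x ^+ 2) / (x22 x ^+ 2 * x21 x)
  end.

Definition gamC2 (i : 'I_3) (x : 'I_3 -> C) : C :=
  match nat_of_ord i with
  | 0 => 1 / x11 x ^+ 2
  | 1 => x11 x ^+ 2 / (x21 x * x22 x)
  | _ => x21 x ^+ 2 * x22 x ^+ 2 / x11 x ^+ 2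
  end.

End GeomCrystal.

(* Main.v *)
Require Import Defs.
From mathcomp Require Import all_boot all_order all_algebra.
From mathcomp Require Import reals complex.
From mathcomp Require Import ring lra.
Set Implicit Arguments. Unset Strict Implicit. Unset Printing Implicit Defensive.
Import Order.TTheory GRing.Theory Num.Theory.
Local Open Scope ring_scope.

Section S.
Variable R : realType.
Local Notation C := (R[i]).
Local Notation o0 := (@Ordinal 3 0 isT).
Local Notation o1 := (@Ordinal 3 1 isT).
Local Notation o2 := (@Ordinal 3 2 isT).

Definition pt (y : 'I_3 -> C) a b d := [/\ x22 y = a, x11 y = b & x21 y = d].

Lemma ptx y : pt y (x22 y) (x11 y) (x21 y). Proof. by []. Qed.

Lemma ptE y a b d a' b' d' : pt y a b d -> a = a' -> b = b' -> d = d' -> pt y a' b' d'.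
Proof. by move=> p <- <- <-. Qed.

Lemma L0 y a b d c u v : pt y a b d -> d * a + b ^+ 2 = u -> c * d * a + b ^+ 2 = v ->
  pt (eC2 o0 c y) (v / u / c * a) (b / c) (d / (v / u)).
Proof.
case=> ha hb hd hu hv.
by rewrite /pt /eC2 /= /x22 /x11 /x21 /mk3 /= /cc2 -/(x22 y) -/(x11 y) -/(x21 y) ha hb hd hu hv.
Qed.

Lemma L1 y a b d c : pt y a b d -> pt (eC2 o1 c y) a (c * b) d.
Proof. by case=> ha hb hd; rewrite /pt /eC2 /= /x22 /x11 /x21 /mk3 /= -/(x22 y) -/(x11 y) -/(x21 y) ha hb hd. Qed.

Lemma L2 y a b d c u v : pt y a b d -> d * a + b ^+ 2 = u -> c * d * a + b ^+ 2 = v ->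
  pt (eC2 o2 c y) (v / u * a) b (c / (v / u) * d).
Proof.
case=> ha hb hd hu hv.
by rewrite /pt /eC2 /= /x22 /x11 /x21 /mk3 /= /cc2 -/(x22 y) -/(x11 y) -/(x21 y) ha hb hd hu hv.
Qed.

Lemma torusP y a b d : pt y a b d -> torus3 y -> [/\ a != 0, b != 0 & d != 0].
Proof. by case=> <- <- <- t; split; apply: t. Qed.

Lemma D0 y a b d c : pt y a b d -> domC2 o0 c y ->
  [/\ c != 0, [/\ a != 0, b != 0 & d != 0], d * a + b ^+ 2 != 0 & c * d * a + b ^+ 2 != 0].
Proof.
move=> p [hc ht [//|[h1 h2]]]; split => //; first exact: torusP p ht.
by case: p h1 => <- <- <-.
by case: p h2 => <- <- <-.
Qed.

Lemma D2 y a b d c : pt y a b d -> domC2 o2 c y ->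
  [/\ c != 0, [/\ a != 0, b != 0 & d != 0], d * a + b ^+ 2 != 0 & c * d * a + b ^+ 2 != 0].
Proof.
move=> p [hc ht [//|[h1 h2]]]; split => //; first exact: torusP p ht.
by case: p h1 => <- <- <-.
by case: p h2 => <- <- <-.
Qed.

Lemma D1 y a b d c : pt y a b d -> domC2 o1 c y -> c != 0 /\ [/\ a != 0, b != 0 & d != 0].
Proof. by move=> p [hc ht _]; split => //; exact: torusP p ht. Qed.

Lemma pt_eq y z a b d : pt y a b d -> pt z a b d -> forall k, y k = z k.
Proof.
case=> h1 h2 h3 [k1 k2 k3] [[|[|[|m]]] hm] //.
- by rewrite (bool_irrelevance hm (isT : 0 < 3)%N) -/(x22 y) -/(x22 z) h1 k1.
- by rewrite (bool_irrelevance hm (isT : 1 < 3)%N) -/(x11 y) -/(x11 z) h2 k2.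
- by rewrite (bool_irrelevance hm (isT : 2 < 3)%N) -/(x21 y) -/(x21 z) h3 k3.
Qed.

Lemma divnz (p m : C) : p / m != 0 -> p != 0.
Proof. by apply: contra => /eqP ->; rewrite mul0r. Qed.


Lemma L0c y a b d c u v k1 k2 : pt y a b d -> domC2 o0 c y ->
  d * a + b ^+ 2 = u / k1 -> c * d * a + b ^+ 2 = v / k2 -> k1 != 0 -> k2 != 0 ->
  [/\ u != 0, v != 0 & pt (eC2 o0 c y) (v / k2 / (u / k1) / c * a) (b / c) (d / (v / k2 / (u / k1)))].
Proof.
move=> p h e1 e2 n1 n2; case: (D0 p h) => _ _ h1 h2; split.
- by apply: divnz (k1) _; rewrite -e1.
- by apply: divnz (k2) _; rewrite -e2.
- exact: L0.
Qed.

Lemma L2c y a b d c u v k1 k2 : pt y a b d -> domC2 o2 c y ->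
  d * a + b ^+ 2 = u / k1 -> c * d * a + b ^+ 2 = v / k2 -> k1 != 0 -> k2 != 0 ->
  [/\ u != 0, v != 0 & pt (eC2 o2 c y) (v / k2 / (u / k1) * a) b (c / (v / k2 / (u / k1)) * d)].
Proof.
move=> p h e1 e2 n1 n2; case: (D2 p h) => _ _ h1 h2; split.
- by apply: divnz (k1) _; rewrite -e1.
- by apply: divnz (k2) _; rewrite -e2.
- exact: L2.
Qed.

Ltac nz := repeat first [ done | assumption | apply/andP; split | apply: mulf_neq0 | apply: expf_neq0 | apply: invr_neq0 | apply: oner_neq0 ].
Ltac fld := field; nz.

Lemma braid10 c1 c2 : erel (@eC2 R) (@domC2 R)
  [:: (o1, c1); (o0, c1 ^+ 2 * c2); (o1, c1 * c2); (o0, c2)]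
  [:: (o0, c2); (o1, c1 * c2); (o0, c1 ^+ 2 * c2); (o1, c1)].
Proof.
move=> x [[[[_ h1] h2] h3] h4] [[[[_ g1] g2] g3] g4].
move: (ptx x); generalize (x22 x) (x11 x) (x21 x); intros a b d p0.
case: (D0 p0 h1) => n1 [na nb nd] nu nv.
case: (D1 (ptx _) h4) => nc1 _.
have H := @L0c _ _ _ _ _ (d * a + b ^+ 2) (c2 * d * a + b ^+ 2) 1 1 p0 h1 ltac:(fld) ltac:(fld) ltac:(nz) ltac:(nz); case: H => _ _ p1.
move: (L1 (c1 * c2) p1) => p2.
have H := @L0c _ _ _ _ _ (d * a + c1 ^+ 2 * c2 * b ^+ 2) (c1 ^+ 2 * (d * a + b ^+ 2)) c2 1 p2 h3 ltac:(fld) ltac:(fld) ltac:(nz) ltac:(nz); case: H => n3 _ p3.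
move: (L1 (c1) p3) => p4.
have q : pt (ecomp (@eC2 R) [:: (o1, c1); (o0, c1 ^+ 2 * c2); (o1, c1 * c2); (o0, c2)] x)
   (a * (c2 * d * a + b ^+ 2) / (c2 * (d * a + c1 ^+ 2 * c2 * b ^+ 2))) (b / c2)
   (d * (d * a + c1 ^+ 2 * c2 * b ^+ 2) / (c1 ^+ 2 * c2 * (c2 * d * a + b ^+ 2))).
  by apply: (ptE p4); fld.
have H := @L1 _ _ _ _ c1 p0; move: H => r1.
have H := @L0c _ _ _ _ _ (d * a + c1 ^+ 2 * b ^+ 2) (c1 ^+ 2 * (c2 * d * a + b ^+ 2)) 1 1 r1 g2 ltac:(fld) ltac:(fld) ltac:(nz) ltac:(nz); case: H => m2 _ r2.
have m2' : d * a + (c1 * b) ^+ 2 != 0 by rewrite exprMn.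
have H := @L1 _ _ _ _ (c1 * c2) r2; move: H => r3.
have H := @L0c _ _ _ _ _ (d * a + c1 ^+ 2 * c2 * b ^+ 2) (d * a + c1 ^+ 2 * b ^+ 2) (c1 ^+ 2 * c2) (c1 ^+ 2) r3 g4 ltac:(fld) ltac:(fld) ltac:(nz) ltac:(nz); case: H => _ _ r4.
apply: pt_eq q _.
by apply: (ptE r4); fld.
Qed.

Lemma braid12 c1 c2 : erel (@eC2 R) (@domC2 R)
  [:: (o1, c1); (o2, c1 ^+ 2 * c2); (o1, c1 * c2); (o2, c2)]
  [:: (o2, c2); (o1, c1 * c2); (o2, c1 ^+ 2 * c2); (o1, c1)].
Proof.
move=> x [[[[_ h1] h2] h3] h4] [[[[_ g1] g2] g3] g4].
move: (ptx x); generalize (x22 x) (x11 x) (x21 x); intros a b d p0.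
case: (D2 p0 h1) => n1 [na nb nd] nu nv.
case: (D1 (ptx _) h4) => nc1 _.
have H := @L2c _ _ _ _ _ (d * a + b ^+ 2) (c2 * d * a + b ^+ 2) 1 1 p0 h1 ltac:(fld) ltac:(fld) ltac:(nz) ltac:(nz); case: H => _ _ p1.
have H := @L1 _ _ _ _ (c1 * c2) p1; move: H => p2.
have H := @L2c _ _ _ _ _ (d * a + c1 ^+ 2 * c2 * b ^+ 2) (c1 ^+ 2 * c2 ^+ 2 * (d * a + b ^+ 2)) c2^-1 1 p2 h3 ltac:(fld) ltac:(fld) ltac:(nz) ltac:(nz); case: H => n3 _ p3.
have H := @L1 _ _ _ _ c1 p3; move: H => p4.
have q : pt (ecomp (@eC2 R) [:: (o1, c1); (o2, c1 ^+ 2 * c2); (o1, c1 * c2); (o2, c2)] x)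
   (a * c1 ^+ 2 * c2 * (c2 * d * a + b ^+ 2) / (d * a + c1 ^+ 2 * c2 * b ^+ 2)) (c1 ^+ 2 * c2 * b)
   (c2 * d * (d * a + c1 ^+ 2 * c2 * b ^+ 2) / (c2 * d * a + b ^+ 2)).
  by apply: (ptE p4); fld.
have H := @L1 _ _ _ _ c1 p0; move: H => r1.
have H := @L2c _ _ _ _ _ (d * a + c1 ^+ 2 * b ^+ 2) (c1 ^+ 2 * (c2 * d * a + b ^+ 2)) 1 1 r1 g2 ltac:(fld) ltac:(fld) ltac:(nz) ltac:(nz); case: H => m2 _ r2.
have m2' : d * a + (c1 * b) ^+ 2 != 0 by rewrite exprMn.
have H := @L1 _ _ _ _ (c1 * c2) r2; move: H => r3.
have H := @L2c _ _ _ _ _ (d * a + c1 ^+ 2 * c2 * b ^+ 2) (d * a + c1 ^+ 2 * b ^+ 2) (c1 ^+ 2 * c2)^-1 (c1 ^+ 2 * c2 ^+ 2)^-1 r3 g4 ltac:(fld) ltac:(fld) ltac:(nz) ltac:(nz); case: H => _ _ r4.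
apply: pt_eq q _.
by apply: (ptE r4); fld.
Qed.

Lemma comm02 c1 c2 : erel (@eC2 R) (@domC2 R) [:: (o0, c1); (o2, c2)] [:: (o2, c2); (o0, c1)].
Proof.
move=> x [[_ h1] h2] [[_ g1] g2].
move: (ptx x); generalize (x22 x) (x11 x) (x21 x); intros a b d p0.
case: (D2 p0 h1) => n2 [na nb nd] nu nv.
case: (D0 p0 g1) => n1 _ _ nv1.
have H := @L2c _ _ _ _ _ (d * a + b ^+ 2) (c2 * d * a + b ^+ 2) 1 1 p0 h1 ltac:(fld) ltac:(fld) ltac:(nz) ltac:(nz); case: H => _ _ p1.
have H := @L0c _ _ _ _ _ (c2 * d * a + b ^+ 2) (c1 * c2 * d * a + b ^+ 2) 1 1 p1 h2 ltac:(fld) ltac:(fld) ltac:(nz) ltac:(nz); case: H => _ n3 p2.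
have q : pt (ecomp (@eC2 R) [:: (o0, c1); (o2, c2)] x)
   (a * (c1 * c2 * d * a + b ^+ 2) / (c1 * (d * a + b ^+ 2))) (b / c1)
   (c2 * d * (d * a + b ^+ 2) / (c1 * c2 * d * a + b ^+ 2)).
  by apply: (ptE p2); fld.
have H := @L0c _ _ _ _ _ (d * a + b ^+ 2) (c1 * d * a + b ^+ 2) 1 1 p0 g1 ltac:(fld) ltac:(fld) ltac:(nz) ltac:(nz); case: H => _ _ r1.
have H := @L2c _ _ _ _ _ (c1 * d * a + b ^+ 2) (c1 * c2 * d * a + b ^+ 2) (c1 ^+ 2) (c1 ^+ 2) r1 g2 ltac:(fld) ltac:(fld) ltac:(nz) ltac:(nz); case: H => _ _ r2.
apply: pt_eq q _.
by apply: (ptE r2); fld.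
Qed.

Lemma act0 c1 c2 : erel (@eC2 R) (@domC2 R) [:: (o0, c1); (o0, c2)] [:: (o0, c1 * c2)].
Proof.
move=> x [[_ h1] h2] [_ g1].
move: (ptx x); generalize (x22 x) (x11 x) (x21 x); intros a b d p0.
case: (D0 p0 h1) => n2 [na nb nd] nu nv.
case: (D0 p0 g1) => n12 _ _ nv1.
have H := @L0c _ _ _ _ _ (d * a + b ^+ 2) (c2 * d * a + b ^+ 2) 1 1 p0 h1 ltac:(fld) ltac:(fld) ltac:(nz) ltac:(nz); case: H => _ _ p1.
have H := @L0c _ _ _ _ _ (c2 * d * a + b ^+ 2) (c1 * c2 * d * a + b ^+ 2) (c2 ^+ 2) (c2 ^+ 2) p1 h2 ltac:(fld) ltac:(fld) ltac:(nz) ltac:(nz); case: H => _ _ p2.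
have H := @L0c _ _ _ _ _ (d * a + b ^+ 2) (c1 * c2 * d * a + b ^+ 2) 1 1 p0 g1 ltac:(fld) ltac:(fld) ltac:(nz) ltac:(nz); case: H => _ _ r1.
have n1 : c1 != 0 by move: n12; rewrite mulf_eq0 negb_or => /andP[].
apply: pt_eq (ptE p2 _ _ _) r1; fld.
Qed.

Lemma act1 c1 c2 : erel (@eC2 R) (@domC2 R) [:: (o1, c1); (o1, c2)] [:: (o1, c1 * c2)].
Proof.
move=> x _ _.
apply: pt_eq (L1 c1 (L1 c2 (ptx x))) (ptE (L1 (c1 * c2) (ptx x)) _ _ _) => //.
by rewrite mulrA.
Qed.

Lemma act2 c1 c2 : erel (@eC2 R) (@domC2 R) [:: (o2, c1); (o2, c2)] [:: (o2, c1 * c2)].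
Proof.
move=> x [[_ h1] h2] [_ g1].
move: (ptx x); generalize (x22 x) (x11 x) (x21 x); intros a b d p0.
case: (D2 p0 h1) => n2 [na nb nd] nu nv.
case: (D2 p0 g1) => n12 _ _ nv1.
have H := @L2c _ _ _ _ _ (d * a + b ^+ 2) (c2 * d * a + b ^+ 2) 1 1 p0 h1 ltac:(fld) ltac:(fld) ltac:(nz) ltac:(nz); case: H => _ _ p1.
have H := @L2c _ _ _ _ _ (c2 * d * a + b ^+ 2) (c1 * c2 * d * a + b ^+ 2) 1 1 p1 h2 ltac:(fld) ltac:(fld) ltac:(nz) ltac:(nz); case: H => _ _ p2.
have H := @L2c _ _ _ _ _ (d * a + b ^+ 2) (c1 * c2 * d * a + b ^+ 2) 1 1 p0 g1 ltac:(fld) ltac:(fld) ltac:(nz) ltac:(nz); case: H => _ _ r1.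
have n1 : c1 != 0 by move: n12; rewrite mulf_eq0 negb_or => /andP[].
apply: pt_eq (ptE p2 _ _ _) r1; fld.
Qed.


Lemma ord3 (i : 'I_3) : [\/ i = o0, i = o1 | i = o2].
Proof.
case: i => [[|[|[|m]]] hm].
- by apply: Or31; apply: val_inj.
- by apply: Or32; apply: val_inj.
- by apply: Or33; apply: val_inj.
- by [].
Qed.

Lemma gamE0 (y : 'I_3 -> C) : gamC2 o0 y = 1 / x11 y ^+ 2. Proof. by []. Qed.
Lemma gamE1 (y : 'I_3 -> C) : gamC2 o1 y = x11 y ^+ 2 / (x21 y * x22 y). Proof. by []. Qed.
Lemma gamE2 (y : 'I_3 -> C) : gamC2 o2 y = x21 y ^+ 2 * x22 y ^+ 2 / x11 y ^+ 2. Proof. by []. Qed.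
Lemma epsE0 (y : 'I_3 -> C) : epsC2 o0 y = x21 y + x11 y ^+ 2 / x22 y. Proof. by []. Qed.
Lemma epsE1 (y : 'I_3 -> C) : epsC2 o1 y = x22 y / x11 y. Proof. by []. Qed.
Lemma epsE2 (y : 'I_3 -> C) : epsC2 o2 y = (x21 y * x22 y + x11 y ^+ 2) / (x22 y ^+ 2 * x21 y). Proof. by []. Qed.

Lemma S0 x c : domC2 o0 c x ->
  let a := x22 x in let b := x11 x in let d := x21 x in
  [/\ c != 0, [/\ a != 0, b != 0 & d != 0], d * a + b ^+ 2 != 0, c * d * a + b ^+ 2 != 0 &
   pt (eC2 o0 c x) ((c * d * a + b ^+ 2) / (d * a + b ^+ 2) / c * a) (b / c)
                   (d / ((c * d * a + b ^+ 2) / (d * a + b ^+ 2)))].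
Proof.
move=> h /=; case: (D0 (ptx x) h) => n1 n2 n3 n4; split => //; exact: (L0 (ptx x)).
Qed.

Lemma S2 x c : domC2 o2 c x ->
  let a := x22 x in let b := x11 x in let d := x21 x in
  [/\ c != 0, [/\ a != 0, b != 0 & d != 0], d * a + b ^+ 2 != 0, c * d * a + b ^+ 2 != 0 &
   pt (eC2 o2 c x) ((c * d * a + b ^+ 2) / (d * a + b ^+ 2) * a) b
                   (c / ((c * d * a + b ^+ 2) / (d * a + b ^+ 2)) * d)].
Proof.
move=> h /=; case: (D2 (ptx x) h) => n1 n2 n3 n4; split => //; exact: (L2 (ptx x)).
Qed.

Lemma ptR y a b d : pt y a b d -> [/\ x22 y = a, x11 y = b & x21 y = d]. Proof. by []. Qed.

Lemma ident i (x : 'I_3 -> C) : domC2 i 1 x -> forall k, eC2 i 1 x k = x k.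
Proof.
case: (ord3 i) => -> h.
- case: (S0 h) => _ [na nb nd] nu _ p.
  by apply: pt_eq (ptE p _ _ _) (ptx x); fld.
- by apply: pt_eq (ptE (L1 1 (ptx x)) _ _ _) (ptx x); rewrite ?mul1r.
- case: (S2 h) => _ [na nb nd] nu _ p.
  by apply: pt_eq (ptE p _ _ _) (ptx x); fld.
Qed.

Lemma cp00 (c : C) : c ^ cartanC2 o0 o0 = c ^+ 2. Proof. by []. Qed.
Lemma cp01 (c : C) : c ^ cartanC2 o0 o1 = c^-1. Proof. by []. Qed.
Lemma cp02 (c : C) : c ^ cartanC2 o0 o2 = 1. Proof. by []. Qed.
Lemma cp10 (c : C) : c ^ cartanC2 o1 o0 = (c ^+ 2)^-1. Proof. by []. Qed.
Lemma cp11 (c : C) : c ^ cartanC2 o1 o1 = c ^+ 2. Proof. by []. Qed.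
Lemma cp12 (c : C) : c ^ cartanC2 o1 o2 = (c ^+ 2)^-1. Proof. by []. Qed.
Lemma cp20 (c : C) : c ^ cartanC2 o2 o0 = 1. Proof. by []. Qed.
Lemma cp21 (c : C) : c ^ cartanC2 o2 o1 = c^-1. Proof. by []. Qed.
Lemma cp22 (c : C) : c ^ cartanC2 o2 o2 = c ^+ 2. Proof. by []. Qed.

Lemma gam_ok i j c (x : 'I_3 -> C) : domC2 i c x -> gamC2 j (eC2 i c x) = c ^ (cartanC2 i j) * gamC2 j x.
Proof.
case: (ord3 i) => -> h.
- case: (S0 h) => nc [na nb nd] nu nv p.
  by case: (ord3 j) => ->; rewrite ?gamE0 ?gamE1 ?gamE2; case: p => p1 p2 p3; rewrite ?p1 ?p2 ?p3; rewrite ?cp00 ?cp01 ?cp02 ?cp10 ?cp11 ?cp12 ?cp20 ?cp21 ?cp22; fld.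
- case: (D1 (ptx x) h) => nc [na nb nd]; move: (L1 c (ptx x)) => p.
  by case: (ord3 j) => ->; rewrite ?gamE0 ?gamE1 ?gamE2; case: p => p1 p2 p3; rewrite ?p1 ?p2 ?p3; rewrite ?cp00 ?cp01 ?cp02 ?cp10 ?cp11 ?cp12 ?cp20 ?cp21 ?cp22; fld.
- case: (S2 h) => nc [na nb nd] nu nv p.
  by case: (ord3 j) => ->; rewrite ?gamE0 ?gamE1 ?gamE2; case: p => p1 p2 p3; rewrite ?p1 ?p2 ?p3; rewrite ?cp00 ?cp01 ?cp02 ?cp10 ?cp11 ?cp12 ?cp20 ?cp21 ?cp22; fld.
Qed.

Lemma eps_ok i c (x : 'I_3 -> C) : domC2 i c x -> epsC2 i (eC2 i c x) = c^-1 * epsC2 i x.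
Proof.
case: (ord3 i) => -> h.
- case: (S0 h) => nc [na nb nd] nu nv p.
  by rewrite !epsE0; case: p => p1 p2 p3; rewrite ?p1 ?p2 ?p3; fld.
- case: (D1 (ptx x) h) => nc [na nb nd]; move: (L1 c (ptx x)) => p.
  by rewrite !epsE1; case: p => p1 p2 p3; rewrite ?p1 ?p2 ?p3; fld.
- case: (S2 h) => nc [na nb nd] nu nv p.
  by rewrite !epsE2; case: p => p1 p2 p3; rewrite ?p1 ?p2 ?p3; fld.
Qed.

Lemma eps_comm i j c (x : 'I_3 -> C) : cartanC2 i j = 0 -> cartanC2 j i = 0 -> domC2 j c x ->
  epsC2 i (eC2 j c x) = epsC2 i x.
Proof.
case: (ord3 i) => ->; case: (ord3 j) => -> //= _ _ h.
- case: (S2 h) => nc [na nb nd] nu nv p.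
  by rewrite !epsE0; case: p => p1 p2 p3; rewrite ?p1 ?p2 ?p3; fld.
- case: (S0 h) => nc [na nb nd] nu nv p.
  by rewrite !epsE2; case: p => p1 p2 p3; rewrite ?p1 ?p2 ?p3; fld.
Qed.


Definition pS m (a b d : pexpr R m) := PAdd (PMul d a) (PMul b b).
Definition pcS m (c a b d : pexpr R m) := PAdd (PMul (PMul c d) a) (PMul b b).
Definition p1 m : pexpr R m := @PConst R m 1.
Definition v4c : pexpr R 4 := @PVar R _ ord0.
Definition v4a : pexpr R 4 := @PVar R _ (lift ord0 o0).
Definition v4b : pexpr R 4 := @PVar R _ (lift ord0 o1).
Definition v4d : pexpr R 4 := @PVar R _ (lift ord0 o2).
Definition v3a : pexpr R 3 := @PVar R _ o0.
Definition v3b : pexpr R 3 := @PVar R _ o1.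
Definition v3d : pexpr R 3 := @PVar R _ o2.

Lemma x22tl (y : 'I_4 -> C) : x22 (tl y) = y (lift ord0 o0). Proof. by []. Qed.
Lemma x11tl (y : 'I_4 -> C) : x11 (tl y) = y (lift ord0 o1). Proof. by []. Qed.
Lemma x21tl (y : 'I_4 -> C) : x21 (tl y) = y (lift ord0 o2). Proof. by []. Qed.

Lemma ptk z a b d : pt z a b d -> [/\ z o0 = a, z o1 = b & z o2 = d]. Proof. by []. Qed.

Lemma mkpos m (D : ('I_m -> C) -> Prop) f (P Q : pexpr R m) : pos_pexpr P -> pos_pexpr Q ->
  (forall x, D x -> peval x Q != 0 /\ f x = peval x P / peval x Q) -> pos_rational_on D f.
Proof. by move=> hP hQ h; exists P, Q; split. Qed.

Lemma pos_rat m (D : ('I_m -> C) -> Prop) f : pos_rational_on D f -> rational_on D f.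
Proof. by case=> P [Q [_ _ h]]; exists P, Q. Qed.

Ltac pp := cbn [pos_pexpr pS pcS p1 v4a v4b v4c v4d v3a v3b v3d];
  repeat match goal with |- _ /\ _ => split | |- True => exact I | |- is_true (0 < 1) => exact: ltr01 end.

Ltac pev := cbn [peval pS pcS p1 v4a v4b v4c v4d v3a v3b v3d]; rewrite ?x22tl ?x11tl ?x21tl -?expr2.

Ltac pev1 na nb nd := pev; rewrite ?x22tl ?x11tl ?x21tl in na nb nd.
Ltac pev2 na nb nd nu nv := pev; rewrite ?x22tl ?x11tl ?x21tl in na nb nd nu nv.

Lemma pos_e i k : pos_rational_on (fun y : 'I_4 -> C => domC2 i (y ord0) (tl y))
                                  (fun y => eC2 i (y ord0) (tl y) k).
Proof.
case: (ord3 i) => ->; case: (ord3 k) => ->.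
- apply: (mkpos (P := PMul (pcS v4c v4a v4b v4d) v4a) (Q := PMul v4c (pS v4a v4b v4d))); try pp.
  move=> y h; case: (S0 h) => nc [na nb nd] nu nv /ptk [-> _ _]; pev2 na nb nd nu nv; split; [nz|fld].
- apply: (mkpos (P := v4b) (Q := v4c)); try pp.
  move=> y h; case: (S0 h) => nc [na nb nd] nu nv /ptk [_ -> _]; pev2 na nb nd nu nv; split; [nz|fld].
- apply: (mkpos (P := PMul v4d (pS v4a v4b v4d)) (Q := pcS v4c v4a v4b v4d)); try pp.
  move=> y h; case: (S0 h) => nc [na nb nd] nu nv /ptk [_ _ ->]; pev2 na nb nd nu nv; split; [nz|fld].
- apply: (mkpos (P := v4a) (Q := p1 _)); try pp.
  move=> y h; case: (D1 (ptx _) h) => nc [na nb nd]; case/ptk: (L1 (y ord0) (ptx (tl y))) => [-> _ _]; pev1 na nb nd; split; [nz|fld].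
- apply: (mkpos (P := PMul v4c v4b) (Q := p1 _)); try pp.
  move=> y h; case: (D1 (ptx _) h) => nc [na nb nd]; case/ptk: (L1 (y ord0) (ptx (tl y))) => [_ -> _]; pev1 na nb nd; split; [nz|fld].
- apply: (mkpos (P := v4d) (Q := p1 _)); try pp.
  move=> y h; case: (D1 (ptx _) h) => nc [na nb nd]; case/ptk: (L1 (y ord0) (ptx (tl y))) => [_ _ ->]; pev1 na nb nd; split; [nz|fld].
- apply: (mkpos (P := PMul (pcS v4c v4a v4b v4d) v4a) (Q := pS v4a v4b v4d)); try pp.
  move=> y h; case: (S2 h) => nc [na nb nd] nu nv /ptk [-> _ _]; pev2 na nb nd nu nv; split; [nz|fld].
- apply: (mkpos (P := v4b) (Q := p1 _)); try pp.
  move=> y h; case: (S2 h) => nc [na nb nd] nu nv /ptk [_ -> _]; pev2 na nb nd nu nv; split; [nz|fld].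
- apply: (mkpos (P := PMul (PMul v4c v4d) (pS v4a v4b v4d)) (Q := pcS v4c v4a v4b v4d)); try pp.
  move=> y h; case: (S2 h) => nc [na nb nd] nu nv /ptk [_ _ ->]; pev2 na nb nd nu nv; split; [nz|fld].
Qed.


Lemma nonroot (p : {poly C}) : p != 0 -> exists n, (2 <= n)%N /\ ~~ root p n%:R.
Proof.
move=> p0.
case: (boolP (has (fun n => ~~ root p n%:R) (iota 2 (size p)))).
  case/hasP => n; rewrite mem_iota => /andP[h2 _] hr; by exists n.
rewrite -all_predC => hall.
pose rs := [seq (n%:R : C) | n <- iota 2 (size p)].
have h1 : all (root p) rs.
  apply/allP => z /mapP [n hn ->]; have := allP hall n hn; by rewrite /= negbK.
have h2 : uniq rs.
  rewrite map_inj_uniq ?iota_uniq //.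
  by move=> m n /eqP; rewrite eqr_nat => /eqP.
by have := max_poly_roots p0 h1 h2; rewrite size_map size_iota ltnn.
Qed.

Definition xl (x0 : 'I_3 -> C) (l : C) := mk3 (x22 x0) (l * x11 x0) (x21 x0).

Fixpoint topoly (x0 : 'I_3 -> C) (q : pexpr R 3) : {poly C} :=
  match q with
  | PConst a => a%:P
  | PVar k => match nat_of_ord k with 0 => (x22 x0)%:P | 1 => 'X * (x11 x0)%:P | _ => (x21 x0)%:P end
  | PAdd p q => topoly x0 p + topoly x0 q
  | PMul p q => topoly x0 p * topoly x0 q
  end.

Lemma topolyE x0 q l : (topoly x0 q).[l] = peval (xl x0 l) q.
Proof.
elim: q => [a|k|p ihp q ihq|p ihp q ihq] /=.
- by rewrite hornerC.
- by case: k => [[|[|m]] hm]; rewrite /= ?hornerC // hornerM hornerX hornerC.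
- by rewrite hornerD ihp ihq.
- by rewrite hornerM ihp ihq.
Qed.

Lemma peval_ext m (x y : 'I_m -> C) q : (forall k, x k = y k) -> peval x q = peval y q.
Proof. by move=> h; elim: q => [a|k|p ihp q ihq|p ihp q ihq] /=; rewrite ?h ?ihp ?ihq. Qed.

Lemma hasI (T : Type) (a : pred T) s : has a s -> exists2 x, List.In x s & a x.
Proof.
elim: s => //= y s ih /orP [h|/ih [x h1 h2]]; first by exists y; [left|].
by exists x; [right|].
Qed.

Lemma Ihas (T : Type) (a : pred T) s x : List.In x s -> a x -> has a s.
Proof. elim: s => //= y s ih [->|/ih h] hx; first by rewrite hx. by rewrite h ?orbT. Qed.

Lemma zkey (ps : seq (pexpr R 3)) x0 : torus3 x0 -> has (fun q => peval x0 q != 0) ps ->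
  exists x, [/\ torus3 x, has (fun q => peval x q != 0) ps & x21 x * x22 x + x11 x ^+ 2 != 0].
Proof.
move=> ht hh; case: (hasI hh) => q qin hq.
case: (boolP (x21 x0 * x22 x0 + x11 x0 ^+ 2 == 0)); last first.
  by move=> hu; exists x0; split => //; apply: (Ihas qin).
move=> /eqP hu.
have p0 : topoly x0 q != 0.
  apply: contra hq => /eqP h0.
  have e : peval x0 q = peval (xl x0 1) q.
    apply: peval_ext => k; apply: pt_eq (ptx x0) _ k.
    by apply: (ptE (ptx _)) => //; rewrite /xl /x11 /= mul1r.
  by rewrite e -topolyE h0 horner0.
case: (nonroot p0) => n [hn hr].
have na : x22 x0 != 0 := ht _.
have nb : x11 x0 != 0 := ht _.
have nd : x21 x0 != 0 := ht _.
exists (xl x0 n%:R); split.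
- have nn : (n%:R : C) != 0 by rewrite pnatr_eq0; case: (n) hn.
  by case=> [[|[|[|m]]] hm] //=; rewrite ?mulf_neq0.
- by apply: (Ihas qin); rewrite -topolyE.
- rewrite /xl /x21 /x22 /x11 /= -/(x22 x0) -/(x11 x0) -/(x21 x0).
  have -> : x21 x0 * x22 x0 + (n%:R * x11 x0) ^+ 2 =
            ((n * n)%:R - 1) * x11 x0 ^+ 2 + (x21 x0 * x22 x0 + x11 x0 ^+ 2) by rewrite natrM; ring.
  rewrite hu addr0 mulf_neq0 ?expf_neq0 // subr_eq0.
  have -> : (1 : C) = 1%:R by [].
  rewrite eqr_nat; case: (n) hn => [|[|k]] //.
Qed.


Lemma x22x (x : 'I_3 -> C) : x o0 = x22 x. Proof. by []. Qed.
Lemma x11x (x : 'I_3 -> C) : x o1 = x11 x. Proof. by []. Qed.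
Lemma x21x (x : 'I_3 -> C) : x o2 = x21 x. Proof. by []. Qed.

Ltac pev3 := cbn [peval pS pcS p1 v3a v3b v3d]; rewrite ?x22x ?x11x ?x21x -?expr2.

Lemma pos_gam j : pos_rational_on (@torus3 R) (gamC2 j).
Proof.
case: (ord3 j) => ->.
- apply: (mkpos (P := p1 _) (Q := PMul v3b v3b)); try pp.
  move=> x ht; have na := ht o0; have nb := ht o1; have nd := ht o2.
  rewrite gamE0; pev3; rewrite ?x22x ?x11x ?x21x in na nb nd; split; [nz|fld].
- apply: (mkpos (P := PMul v3b v3b) (Q := PMul v3d v3a)); try pp.
  move=> x ht; have na := ht o0; have nb := ht o1; have nd := ht o2.
  rewrite gamE1; pev3; rewrite ?x22x ?x11x ?x21x in na nb nd; split; [nz|fld].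
- apply: (mkpos (P := PMul (PMul v3d v3a) (PMul v3d v3a)) (Q := PMul v3b v3b)); try pp.
  move=> x ht; have na := ht o0; have nb := ht o1; have nd := ht o2.
  rewrite gamE2; pev3; rewrite ?x22x ?x11x ?x21x in na nb nd; split; [nz|fld].
Qed.

Lemma pos_eps j : pos_rational_on (@torus3 R) (epsC2 j).
Proof.
case: (ord3 j) => ->.
- apply: (mkpos (P := pS v3a v3b v3d) (Q := v3a)); try pp.
  move=> x ht; have na := ht o0; have nb := ht o1; have nd := ht o2.
  rewrite epsE0; pev3; rewrite ?x22x ?x11x ?x21x in na nb nd; split; [nz|fld].
- apply: (mkpos (P := v3a) (Q := v3b)); try pp.
  move=> x ht; have na := ht o0; have nb := ht o1; have nd := ht o2.
  rewrite epsE1; pev3; rewrite ?x22x ?x11x ?x21x in na nb nd; split; [nz|fld].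
- apply: (mkpos (P := pS v3a v3b v3d) (Q := PMul (PMul v3a v3a) v3d)); try pp.
  move=> x ht; have na := ht o0; have nb := ht o1; have nd := ht o2.
  rewrite epsE2; pev3; rewrite ?x22x ?x11x ?x21x in na nb nd; split; [nz|fld].
Qed.

Lemma has1 (T : Type) (a : pred T) q : has a [:: q] = a q. Proof. by rewrite /= orbF. Qed.

Lemma uE3 (x : 'I_3 -> C) : peval x (pS v3a v3b v3d) = x21 x * x22 x + x11 x ^+ 2. Proof. by []. Qed.
Lemma uE4 (y : 'I_4 -> C) : peval y (PMul (pS v4a v4b v4d) (pcS v4c v4a v4b v4d)) =
  (x21 (tl y) * x22 (tl y) + x11 (tl y) ^+ 2) * (y ord0 * x21 (tl y) * x22 (tl y) + x11 (tl y) ^+ 2).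
Proof. by []. Qed.
Lemma oneE m (y : 'I_m -> C) : peval y (p1 m) = 1. Proof. by []. Qed.

Lemma zopen4 i : zopen (fun y : 'I_4 -> C => y ord0 != 0 /\ torus3 (tl y))
                       (fun y => domC2 i (y ord0) (tl y)).
Proof.
split; first by move=> y [].
case: (ord3 i) => ->.
- exists [:: PMul (pS v4a v4b v4d) (pcS v4c v4a v4b v4d)] => y.
  rewrite has1 uE4 mulf_eq0 negb_or; split.
    by case=> hc ht [//|[h1 h2]]; rewrite h1 h2.
  by case=> [[hc ht] /andP[h1 h2]]; split => //; right.
- exists [:: p1 4] => y; rewrite has1 oneE oner_neq0; split.
    by case.
  by case=> [[hc ht] _]; split => //; left.
- exists [:: PMul (pS v4a v4b v4d) (pcS v4c v4a v4b v4d)] => y.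
  rewrite has1 uE4 mulf_eq0 negb_or; split.
    by case=> hc ht [//|[h1 h2]]; rewrite h1 h2.
  by case=> [[hc ht] /andP[h1 h2]]; split => //; right.
Qed.

Lemma zopen3 i : zopen (@torus3 R) (domC2 i 1).
Proof.
split; first by move=> y [].
case: (ord3 i) => ->.
- exists [:: pS v3a v3b v3d] => y; rewrite has1 uE3; split.
    by case=> hc ht [//|[h1 h2]]; rewrite h1.
  by case=> ht h1; split => //; [exact: oner_neq0 | right; rewrite !mul1r].
- exists [:: p1 3] => y; rewrite has1 oneE oner_neq0; split.
    by case.
  by case=> ht _; split => //; [exact: oner_neq0 | left].
- exists [:: pS v3a v3b v3d] => y; rewrite has1 uE3; split.
    by case=> hc ht [//|[h1 h2]]; rewrite h1.
  by case=> ht h1; split => //; [exact: oner_neq0 | right; rewrite !mul1r].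
Qed.

Lemma zdense3 i : zdense (@torus3 R) (domC2 i 1).
Proof.
move=> V [hVX [ps hps]] [x0 hx0].
have ht := hVX _ hx0; have [_ hh] := (hps x0).1 hx0.
case: (zkey ht hh) => x [tx hx hu]; exists x; split; first by apply/(hps x).2.
case: (ord3 i) => ->; split => //; try exact: oner_neq0.
- by right; rewrite !mul1r.
- by left.
- by right; rewrite !mul1r.
Qed.

Lemma torus_pt z a b d : pt z a b d -> a != 0 -> b != 0 -> d != 0 -> torus3 z.
Proof.
move=> p ha hb hd k; rewrite (pt_eq p (ptx (mk3 a b d)) k).
by case: k => [[|[|[|m]]] hm].
Qed.

Lemma dom_ok i c (x : 'I_3 -> C) : domC2 i c x -> [/\ c != 0, torus3 x & torus3 (eC2 i c x)].
Proof.
move=> h; have [hc ht _] := h; split => //.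
case: (ord3 i) h => -> h.
- case: (S0 h) => nc [na nb nd] nu nv p; apply: (torus_pt p); nz.
- case: (D1 (ptx x) h) => nc [na nb nd]; apply: (torus_pt (L1 c (ptx x))); nz.
- case: (S2 h) => nc [na nb nd] nu nv p; apply: (torus_pt p); nz.
Qed.

Lemma erel_sym l1 l2 : erel (@eC2 R) (@domC2 R) l1 l2 -> erel (@eC2 R) (@domC2 R) l2 l1.
Proof. by move=> h x d1 d2 k; rewrite (h x d2 d1). Qed.

Lemma act i c1 c2 : erel (@eC2 R) (@domC2 R) [:: (i, c1); (i, c2)] [:: (i, c1 * c2)].
Proof. case: (ord3 i) => ->; [exact: act0 | exact: act1 | exact: act2]. Qed.

Lemma braids i j c1 c2 :
     [/\ (cartanC2 i j = 0 -> cartanC2 j i = 0 ->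
            erel (@eC2 R) (@domC2 R) [:: (i, c1); (j, c2)] [:: (j, c2); (i, c1)]),
         (cartanC2 i j = -1 -> cartanC2 j i = -1 ->
            erel (@eC2 R) (@domC2 R) [:: (i, c1); (j, c1 * c2); (i, c2)]
                       [:: (j, c2); (i, c1 * c2); (j, c1)]),
         (cartanC2 i j = -2 -> cartanC2 j i = -1 ->
            erel (@eC2 R) (@domC2 R) [:: (i, c1); (j, c1 ^+ 2 * c2); (i, c1 * c2); (j, c2)]
                       [:: (j, c2); (i, c1 * c2); (j, c1 ^+ 2 * c2); (i, c1)]) &
         (cartanC2 i j = -3 -> cartanC2 j i = -1 ->
            erel (@eC2 R) (@domC2 R) [:: (i, c1); (j, c1 ^+ 3 * c2); (i, c1 ^+ 2 * c2);
                           (j, c1 ^+ 3 * c2 ^+ 2); (i, c1 * c2); (j, c2)]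
                       [:: (j, c2); (i, c1 * c2); (j, c1 ^+ 3 * c2 ^+ 2);
                           (i, c1 ^+ 2 * c2); (j, c1 ^+ 3 * c2); (i, c1)])].
Proof.
case: (ord3 i) => ->; case: (ord3 j) => ->; split => h1 h2; try discriminate.
- exact: comm02.
- exact: braid10.
- exact: braid12.
- apply: erel_sym.  exact: comm02.
Qed.

End S.

Theorem mainTheorem3 (R : realType) :
  pos_geom_crystal (@cartanC2) (@torus3 R) (@eC2 R) (@domC2 R)
                   (@gamC2 R) (@epsC2 R).
Proof.
split.
- split; first exact: dom_ok.
  split; first exact: zopen4.
  split; first by move=> i k; apply: pos_rat; apply: pos_e.
  split; first by move=> i; split; apply: pos_rat; [apply: pos_gam | apply: pos_eps].
  split; first exact: ident.
  split; first exact: act.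
  split; first by move=> i; split; [apply: zopen3 | apply: zdense3].
  split; first exact: gam_ok.
  split; first exact: eps_ok.
  split; first exact: eps_comm.
  exact: braids.
- exact: pos_e.
- exact: pos_gam.
- exact: pos_eps.
Qed.
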